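(* There exists a function $f_*$ in the Schwartz space $\mathcal S(\overline{\mathbb{R}_+})$ such that (i) $f_*>0$ on $\mathbb{R}_+$ and $f_*(0)=1$; (ii) $\int_0^\infty\bigl(|f_*'(t)|^2+(t-\hat\alpha)^2|f_*(t)|^2\bigr)dt=\hat\alpha$; (iii) $\int_0^\infty(t-\hat\alpha)|f_*(t)|^2dt=0$, $\int_0^\infty(t-\hat\alpha)^2|f_*(t)|^2dt=\frac{\hat\alpha}{4}$, and $\int_0^\infty(t-\hat\alpha)^3|f_*(t)|^2dt=\frac16(1-2\hat\alpha^2)$; (iv) $\int_0^\infty f_*'(t)f_*(t)dt=-\frac12$ and $\int_0^\infty t|f_*'(t)|^2dt=\frac13+\frac{\hat\alpha^2}{12}$.
   Context: $\hat\alpha=\alpha/\sqrt2$, where $-\alpha$ is the unique negative zero of the parabolic cylinder function $D_{1/2}$ (the solution of $w''+(1-\tfrac{z^2}{4})w=0$ with $D_{1/2}(z)=e^{-z^2/4}z^{1/2}(1+O(z^{-2}))$ as $z\to+\infty$). Equivalently, $\hat\alpha=\inf\{\int_0^\infty(|f'|^2+(t-\xi)^2|f|^2)dt/|f(0)|^2:\ f(0)\neq0,\ \xi\in\mathbb{R}\}$. *)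

(* Defs.v *)
From Stdlib Require Import Reals.
From Coquelicot Require Import Coquelicot.
Open Scope R_scope.

(* Schwartz space on the closed half-line [0,oo): realised (Seeley extension)
   as restrictions of smooth functions on R whose derivatives of all orders
   decay faster than any polynomial on [0,oo). *)
Definition schwartz_halfline (f : R -> R) : Prop :=
  (forall (n : nat) (x : R), ex_derive (Derive_n f n) x) /\
  (forall (k n : nat), exists C : R,
      forall t : R, 0 <= t -> Rabs (t ^ k * Derive_n f n t) <= C).

Definition int_0_oo (g : R -> R) (v : R) : Prop :=
  is_RInt_gen g (at_point 0) (Rbar_locally p_infty) v.

Definition alpha_hat_quotients : R -> Prop :=
  fun r => exists (f : R -> R) (xi : R),
    schwartz_halfline f /\ f 0 <> 0 /\
    int_0_oo (fun t => (Derive f t) ^ 2 + (t - xi) ^ 2 * (f t) ^ 2)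
             (r * (f 0) ^ 2).

(* alpha_hat = inf of the quotients (a finite positive number). *)
Definition alpha_hat : R := real (Glb_Rbar alpha_hat_quotients).

(* Main.v *)
Require Import Defs.
From Stdlib Require Import Reals.
From Coquelicot Require Import Coquelicot.
From Stdlib Require Import Lra Lia Psatz.
From Stdlib Require Classical_Prop FunctionalExtensionality.
Open Scope R_scope.

Lemma exp_le' x y : x <= y -> exp x <= exp y.
Proof. intros [H|H]. left; now apply exp_increasing. subst; lra. Qed.

Lemma exp_pow' y n : (exp y) ^ n = exp (INR n * y).
Proof.
  induction n as [|n IH]. simpl. rewrite Rmult_0_l, exp_0. reflexivity.
  rewrite S_INR. simpl pow. rewrite IH. rewrite <- exp_plus. f_equal. ring.
Qed.

Lemma pow_le_exp y n : 0 <= y -> y ^ n <= exp (INR n * y).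
Proof.
  intros Hy. rewrite <- exp_pow'. apply pow_incr. split; auto.
  generalize (exp_ineq1_le y); lra.
Qed.

Definition E (a y : R) := exp (- (a^2)/2 - a*y^2 - y^4/4).
Definition Fi (k:nat) (a y : R) := y^(2*k) * E a y.
Definition Fn (k n : nat) (a : R) := RInt (Fi k a) 0 (INR n).

Lemma Fi_bound_core k c a y : 0 <= c -> -c <= a -> 0 <= y ->
  y^(2*k) * exp (- a*y^2 - y^4/4) <= exp (6 + INR k ^2 + 4*c^2) * exp (- y).
Proof.
  intros Hc Ha Hy.
  eapply Rle_trans. apply Rmult_le_compat_r. left; apply exp_pos.
  apply pow_le_exp; auto.
  rewrite <- !exp_plus. apply exp_le'.
  rewrite mult_INR. simpl INR.
  set (kk := INR k).
  assert (0 <= kk) by apply pos_INR.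
  assert (- a * y^2 <= c * y^2) by (apply Rmult_le_compat_r; [nra|lra]).
  assert (c*y^2 <= y^4/16 + 4*c^2) by (assert (0 <= (y^2/4-2*c)^2) by apply pow2_ge_0; nra).
  assert (y <= y^4/16 + 2) by (assert (0 <= (y^2/4-1)^2) by apply pow2_ge_0; assert (0 <= (y-1)^2) by apply pow2_ge_0; nra).
  assert (y^2 <= y^4/16 + 4) by (assert (0 <= (y^2/4-2)^2) by apply pow2_ge_0; nra).
  assert (2*kk*y <= y^2 + kk^2) by (assert (0 <= (y-kk)^2) by apply pow2_ge_0; nra).
  nra.
Qed.
Lemma Fi_cont k a y : continuous (Fi k a) y.
Proof. apply (ex_derive_continuous (V:=R_NormedModule)). unfold Fi, E. auto_derive. auto. Qed.

Lemma Fi_ex k a u v : ex_RInt (Fi k a) u v.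
Proof. apply (ex_RInt_continuous (V:=R_CompleteNormedModule)). intros; apply Fi_cont. Qed.

Lemma Fi_ge0 k a y : 0 <= y -> 0 <= Fi k a y.
Proof. intros. unfold Fi, E. apply Rmult_le_pos. apply pow_le; auto. left; apply exp_pos. Qed.

Definition Bk (c : R) (k : nat) := exp (6 + INR k ^2 + 4*c^2).

Lemma Fi_bound k c a y : 0 <= c -> -c <= a -> 0 <= y ->
  Fi k a y <= exp (- a^2/2) * Bk c k * exp (- y).
Proof.
  intros Hc Ha Hy. unfold Fi, E.
  replace (- a ^ 2 / 2 - a * y ^ 2 - y ^ 4 / 4) with (- a^2/2 + (- a*y^2 - y^4/4)) by ring.
  rewrite exp_plus.
  replace (y ^ (2 * k) * (exp (- a ^ 2 / 2) * exp (- a * y ^ 2 - y ^ 4 / 4))) with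
    (exp (- a ^ 2 / 2) * (y ^ (2 * k) * exp (- a * y ^ 2 - y ^ 4 / 4))) by ring.
  rewrite Rmult_assoc. apply Rmult_le_compat_l. left; apply exp_pos.
  apply Fi_bound_core; auto.
Qed.

Lemma is_RInt_expm n m : is_RInt (fun y => exp (- y)) n m (exp (- n) - exp (- m)).
Proof.
  replace (exp (- n) - exp (- m)) with (minus ((fun y => - exp (- y)) m) ((fun y => - exp (-y)) n)).
  2:{ unfold minus, plus, opp; simpl. ring. }
  apply (is_RInt_derive (V:=R_CompleteNormedModule) (fun y => - exp (- y))).
  - intros x _. auto_derive. auto. ring.
  - intros x _. apply (ex_derive_continuous (V:=R_NormedModule)). auto_derive. auto.
Qed.

Lemma RInt_Fi_le k c a n m : 0 <= c -> -c <= a -> 0 <= n <= m ->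
  0 <= RInt (Fi k a) n m <= exp (- a^2/2) * Bk c k * (exp (- n) - exp (- m)).
Proof.
  intros Hc Ha Hnm. split.
  - apply RInt_ge_0. lra. apply Fi_ex. intros; apply Fi_ge0; lra.
  - set (C := exp (- a^2/2) * Bk c k).
    assert (Hg : is_RInt (fun y => C * exp (- y)) n m (C * (exp (- n) - exp (- m)))).
    { exact (is_RInt_scal (V:=R_NormedModule) _ _ _ C _ (is_RInt_expm n m)). }
    rewrite <- (is_RInt_unique _ _ _ _ Hg).
    apply RInt_le. lra. apply Fi_ex. eexists; apply Hg.
    intros x Hx. apply Fi_bound; lra.
Qed.

Lemma Fn_S k n a : Fn k (S n) a = Fn k n a + RInt (Fi k a) (INR n) (INR (S n)).
Proof.
  unfold Fn. rewrite <- (RInt_Chasles (Fi k a) 0 (INR n) (INR (S n))); try apply Fi_ex.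
  reflexivity.
Qed.

Lemma Fn_incr k n a : Fn k n a <= Fn k (S n) a.
Proof.
  rewrite Fn_S. destruct (RInt_Fi_le k (Rabs a) a (INR n) (INR (S n))).
  apply Rabs_pos. generalize (Rabs_pos a) (Rcomplements.Rabs_maj2 a); lra.
  split. apply pos_INR. apply le_INR; lia. lra.
Qed.

Lemma Fn_bound k c a n : 0 <= c -> -c <= a -> 0 <= Fn k n a <= exp (- a^2/2) * Bk c k.
Proof.
  intros Hc Ha. unfold Fn. destruct (RInt_Fi_le k c a 0 (INR n) Hc Ha).
  split. lra. apply pos_INR. split. auto.
  eapply Rle_trans. apply H0. rewrite Ropp_0, exp_0.
  assert (0 < exp (- INR n)) by apply exp_pos.
  assert (0 < exp (- a ^ 2 / 2) * Bk c k) by (apply Rmult_lt_0_compat; apply exp_pos).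
  nra.
Qed.

Lemma Fn_cauchy k c a n m : 0 <= c -> -c <= a -> (n <= m)%nat ->
  Rabs (Fn k m a - Fn k n a) <= exp (- a^2/2) * Bk c k * exp (- INR n).
Proof.
  intros Hc Ha Hnm. unfold Fn.
  rewrite <- (RInt_Chasles (Fi k a) 0 (INR n) (INR m)); try apply Fi_ex.
  change (Rabs (RInt (Fi k a) 0 (INR n) + RInt (Fi k a) (INR n) (INR m) - RInt (Fi k a) 0 (INR n)) <=
    exp (- a ^ 2 / 2) * Bk c k * exp (- INR n)).
  assert (Ex : forall x y : R, x + y - x = y) by (intros; ring).
  rewrite Ex.
  destruct (RInt_Fi_le k c a (INR n) (INR m) Hc Ha).
  split. apply pos_INR. apply le_INR; auto.
  rewrite Rabs_pos_eq; auto. eapply Rle_trans. apply H0.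
  assert (0 < exp (- INR m)) by apply exp_pos.
  assert (0 < exp (- a ^ 2 / 2) * Bk c k) by (apply Rmult_lt_0_compat; apply exp_pos).
  nra.
Qed.

Definition Ik (k : nat) (a : R) : R := real (Lim_seq (fun n => Fn k n a)).

Lemma I_lim k a : is_lim_seq (fun n => Fn k n a) (Ik k a).
Proof.
  assert (H : ex_finite_lim_seq (fun n => Fn k n a)).
  { apply ex_finite_lim_seq_incr with (exp (- a^2/2) * Bk (Rabs a) k).
    intros; apply Fn_incr.
    intros n. apply (Fn_bound k (Rabs a) a n). apply Rabs_pos.
    generalize (Rcomplements.Rabs_maj2 a); lra. }
  destruct H as [l Hl]. unfold Ik. rewrite (is_lim_seq_unique _ _ Hl). simpl. auto.
Qed.

Lemma I_bound k c a : 0 <= c -> -c <= a -> 0 < Ik k a <= exp (- a^2/2) * Bk c k.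
Proof.
  intros Hc Ha. split.
  - apply Rlt_le_trans with (Fn k 1 a).
    unfold Fn. simpl INR. apply RInt_gt_0. lra.
    intros x Hx. unfold Fi, E. apply Rmult_lt_0_compat. apply pow_lt; lra. apply exp_pos.
    intros; apply Fi_cont.
    apply (is_lim_seq_incr_compare _ _ (I_lim k a)). intros; apply Fn_incr.
  - assert (H := is_lim_seq_le _ (fun _ => exp (- a^2/2) * Bk c k) _ _
       (fun n => proj2 (Fn_bound k c a n Hc Ha)) (I_lim k a) (is_lim_seq_const _)).
    simpl in H. auto.
Qed.
Lemma cpt_of_der f x : ex_derive f x -> continuity_pt f x.
Proof. intros H. apply continuity_pt_filterlim. apply (ex_derive_continuous (V:=R_NormedModule)); auto. Qed.

Lemma Fi_deriv k a y : is_derive (fun u => Fi k u y) a (- a * Fi k a y - Fi (S k) a y).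
Proof.
  unfold Fi, E. auto_derive. auto.
  replace (- (a * (a * 1)) * / 2 + - (a * (y * (y * 1))) + - (y * (y * (y * (y * 1))) / 4))
    with (- a ^ 2 / 2 - a * y ^ 2 - y ^ 4 / 4) by (simpl; field).
  replace (k + (k + 0))%nat with (2*k)%nat by lia.
  replace (2 * S k)%nat with (2 + 2*k)%nat by lia. rewrite pow_add. field.
Qed.

Lemma c2_pow n (g : R -> R -> R) x y : continuity_2d_pt g x y ->
  continuity_2d_pt (fun u v => (g u v)^n) x y.
Proof.
  intros H. apply (continuity_1d_2d_pt_comp (fun z => z^n) g). apply cpt_of_der. auto_derive. auto. auto.
Qed.

Lemma c2_exp (g : R -> R -> R) x y : continuity_2d_pt g x y ->
  continuity_2d_pt (fun u v => exp (g u v)) x y.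
Proof.
  intros H. apply (continuity_1d_2d_pt_comp exp g). apply cpt_of_der. auto_derive. auto. auto.
Qed.

Lemma Fi_c2 k x y : continuity_2d_pt (fun u v => Fi k u v) x y.
Proof.
  unfold Fi, E. apply continuity_2d_pt_mult.
  apply (c2_pow _ (fun u v => v)). apply continuity_2d_pt_id2.
  apply (c2_exp (fun u v => - u ^ 2 / 2 - u * v ^ 2 - v ^ 4 / 4)).
  apply continuity_2d_pt_minus. apply continuity_2d_pt_minus.
  apply (continuity_2d_pt_ext (fun u v => - (u^2) * / 2)). intros; unfold Rdiv; ring.
  apply continuity_2d_pt_mult. apply continuity_2d_pt_opp. apply (c2_pow _ (fun u v => u)).
  apply continuity_2d_pt_id1. apply continuity_2d_pt_const.
  apply continuity_2d_pt_mult. apply continuity_2d_pt_id1.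
  apply (c2_pow _ (fun u v => v)). apply continuity_2d_pt_id2.
  apply (continuity_2d_pt_ext (fun u v => v^4 * / 4)). intros; unfold Rdiv; ring.
  apply continuity_2d_pt_mult. apply (c2_pow _ (fun u v => v)). apply continuity_2d_pt_id2.
  apply continuity_2d_pt_const.
Qed.

Lemma Fn_deriv k n a : is_derive (Fn k n) a (- a * Fn k n a - Fn (S k) n a).
Proof.
  assert (H := is_derive_RInt_param (fun u t => Fi k u t) 0 (INR n) a).
  unfold Fn.
  replace (- a * RInt (Fi k a) 0 (INR n) - RInt (Fi (S k) a) 0 (INR n))
    with (RInt (fun t => Derive (fun u => Fi k u t) a) 0 (INR n)).
  apply H.
  - apply filter_forall. intros x t _. eexists. apply Fi_deriv.
  - intros t _. apply continuity_2d_pt_ext with (fun u v => - u * Fi k u v - Fi (S k) u v).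
    intros u v. symmetry. apply is_derive_unique. apply Fi_deriv.
    apply continuity_2d_pt_minus. apply continuity_2d_pt_mult.
    apply continuity_2d_pt_opp. apply continuity_2d_pt_id1. apply Fi_c2. apply Fi_c2.
  - apply filter_forall. intros x. apply Fi_ex.
  - rewrite (RInt_ext _ (fun t => - a * Fi k a t - Fi (S k) a t)).
    2:{ intros t _. apply is_derive_unique. apply Fi_deriv. }
    apply is_RInt_unique.
    apply (is_RInt_minus (V:=R_NormedModule) (fun t => - a * Fi k a t) (Fi (S k) a)).
    apply (is_RInt_scal (V:=R_NormedModule) (Fi k a) 0 (INR n) (- a)). apply (RInt_correct (V:=R_CompleteNormedModule)). apply Fi_ex.
    apply (RInt_correct (V:=R_CompleteNormedModule)). apply Fi_ex.
Qed.
Lemma exp_small eps : 0 < eps -> exists N : nat, forall n, (N <= n)%nat -> exp (- INR n) < eps.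
Proof.
  intros He. destruct (proj2 (is_lim_seq_spec INR p_infty) is_lim_seq_INR (/ eps)) as [N HN].
  exists N. intros n Hn. specialize (HN n Hn).
  rewrite exp_Ropp. assert (H1 := exp_ineq1_le (INR n)).
  assert (0 < INR n) by (apply Rlt_trans with (/eps); auto; apply Rinv_0_lt_compat; auto).
  apply Rle_lt_trans with (/ (1 + INR n)).
  apply Rinv_le_contravar. lra. lra.
  rewrite <- (Rinv_inv eps). apply Rinv_lt_contravar. apply Rmult_lt_0_compat. apply Rinv_0_lt_compat; auto. lra. lra.
Qed.

Lemma CVU_bound (g : nat -> R -> R) D B : 0 < B ->
  (forall n m a, D a -> (n <= m)%nat -> Rabs (g m a - g n a) <= B * exp (- INR n)) ->
  CVU_cauchy g D.
Proof.
  intros HB H eps. destruct (exp_small (eps / (2*B))) as [N HN].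
  apply Rdiv_lt_0_compat. apply cond_pos. lra.
  exists N. intros n m x Dx Hn Hm.
  assert (H1 := H N n x Dx Hn). assert (H2 := H N m x Dx Hm).
  assert (H3 := HN N (le_n N)).
  replace (g n x - g m x) with ((g n x - g N x) - (g m x - g N x)) by ring.
  eapply Rle_lt_trans. apply Rabs_triang. rewrite Rabs_Ropp.
  apply Rle_lt_trans with (2 * (B * exp (- INR N))). lra.
  replace (pos eps) with (2 * B * (eps / (2 * B))) by (field; lra).
  assert (0 < B * exp (- INR N)) by (apply Rmult_lt_0_compat; auto; apply exp_pos).
  apply (Rmult_lt_compat_l (2*B)) in H3. lra. lra.
Qed.

Lemma Bk_pos c k : 0 < Bk c k.
Proof. apply exp_pos. Qed.

Lemma Fn_cauchy' k M n m a : 0 < M -> -M < a < M -> (n <= m)%nat ->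
  Rabs (Fn k m a - Fn k n a) <= Bk M k * exp (- INR n).
Proof.
  intros HM Ha Hnm. eapply Rle_trans. apply (Fn_cauchy k M a n m); auto; lra.
  apply Rmult_le_compat_r. left; apply exp_pos.
  rewrite <- (Rmult_1_l (Bk M k)) at 2. apply Rmult_le_compat_r. left; apply Bk_pos.
  rewrite <- exp_0. apply exp_le'. assert (0 <= a^2) by apply pow2_ge_0. lra.
Qed.

Lemma Derive_Fn k n a : Derive (Fn k n) a = - a * Fn k n a - Fn (S k) n a.
Proof. apply is_derive_unique. apply Fn_deriv. Qed.

Lemma I_deriv k a : is_derive (Ik k) a (- a * Ik k a - Ik (S k) a).
Proof.
  set (M := Rabs a + 1).
  assert (HM : 0 < M) by (unfold M; generalize (Rabs_pos a); lra).
  set (D := fun x => -M < x < M).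
  assert (Da : D a) by (unfold D, M; generalize (Rcomplements.Rabs_maj2 a) (Rle_abs a); lra).
  assert (H := CVU_Derive (fun n => Fn k n) D).
  replace (- a * Ik k a - Ik (S k) a) with (real (Lim_seq (fun n => Derive (Fn k n) a))).
  apply H; clear H.
  - apply open_and. apply open_gt. apply open_lt.
  - intros x y z Dx Dy Hz. unfold D in *. lra.
  - apply CVU_dom_cauchy. apply CVU_bound with (Bk M k). apply Bk_pos.
    intros n m x Dx Hnm. apply Fn_cauchy'; auto.
  - intros n x _. eexists. apply Fn_deriv.
  - intros n x _. apply continuity_pt_ext with (fun a => - a * Fn k n a - Fn (S k) n a).
    intros; symmetry; apply Derive_Fn.
    apply cpt_of_der. auto_derive. split; [eexists; apply Fn_deriv|split; [eexists; apply Fn_deriv|auto]].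
  - apply CVU_dom_cauchy. apply CVU_bound with (M * Bk M k + Bk M (S k)).
    assert (0 < Bk M k) by apply Bk_pos. assert (0 < Bk M (S k)) by apply Bk_pos. nra.
    intros n m x Dx Hnm. rewrite !Derive_Fn.
    replace (- x * Fn k m x - Fn (S k) m x - (- x * Fn k n x - Fn (S k) n x))
      with (- x * (Fn k m x - Fn k n x) - (Fn (S k) m x - Fn (S k) n x)) by ring.
    eapply Rle_trans. apply Rabs_triang. rewrite Rabs_Ropp, Rabs_mult, Rabs_Ropp.
    assert (H1 := Fn_cauchy' k M n m x HM Dx Hnm).
    assert (H2 := Fn_cauchy' (S k) M n m x HM Dx Hnm).
    assert (Rabs x <= M) by (unfold D in Dx; apply Rabs_le; lra).
    assert (H4 : Rabs x * Rabs (Fn k m x - Fn k n x) <= M * (Bk M k * exp (- INR n))).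
    { apply Rmult_le_compat; auto; apply Rabs_pos. }
    nra.
  - auto.
  - rewrite (Lim_seq_ext _ (fun n => - a * Fn k n a - Fn (S k) n a)).
    2: intros; apply Derive_Fn.
    rewrite (is_lim_seq_unique _ (- a * Ik k a - Ik (S k) a)). reflexivity.
    apply (is_lim_seq_minus _ _ (- a * Ik k a) (Ik (S k) a)).
    apply (is_lim_seq_scal_l _ (- a) (Ik k a)). apply I_lim. apply I_lim.
    simpl. reflexivity.
Qed.
Definition qE a y := - a^2/2 - a*y^2 - y^4/4.
Lemma E_dy a y : is_derive (fun y => E a y) y (E a y * (- 2 * a * y - y^3)).
Proof.
  assert (H1: is_derive (qE a) y (-2*a*y - y^3)) by (unfold qE; auto_derive; auto; field).
  assert (H2: is_derive exp (qE a y) (exp (qE a y))) by (auto_derive; auto; ring).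
  generalize (is_derive_comp _ _ _ _ _ H2 H1). unfold scal; simpl; unfold mult; simpl.
  intro H. unfold E. fold (qE a y). rewrite Rmult_comm. exact H.
Qed.

Lemma lim_exp_0 C : is_lim_seq (fun n => C * exp (- INR n)) 0.
Proof.
  replace (Finite 0) with (Rbar_mult C 0) by (simpl; f_equal; ring).
  apply is_lim_seq_scal_l.
  apply is_lim_seq_spec. intros eps. destruct (exp_small eps (cond_pos eps)) as [N HN].
  exists N. intros n Hn. rewrite Rminus_0_r, Rabs_pos_eq. auto. left; apply exp_pos.
Qed.

Lemma ibp_n n a : Fn 0 n a - 2 * a * Fn 1 n a - Fn 2 n a = INR n * E a (INR n).
Proof.
  unfold Fn.
  assert (H : is_RInt (fun y => Fi 0 a y - 2 * a * Fi 1 a y - Fi 2 a y) 0 (INR n)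
     (minus ((fun y => y * E a y) (INR n)) ((fun y => y * E a y) 0))).
  { apply (is_RInt_derive (V:=R_CompleteNormedModule) (fun y => y * E a y)).
    - intros x _. auto_derive. eexists; apply E_dy.
      replace (Derive (fun x0 : R => E a x0) x) with (E a x * (- 2 * a * x - x^3)) by (symmetry; apply is_derive_unique; apply E_dy). unfold Fi. simpl. ring.
    - intros x _. apply (ex_derive_continuous (V:=R_NormedModule)). unfold Fi. auto_derive.
      repeat split; eexists; apply E_dy. }
  assert (H2 : is_RInt (fun y => Fi 0 a y - 2 * a * Fi 1 a y - Fi 2 a y) 0 (INR n)
     (RInt (Fi 0 a) 0 (INR n) - 2 * a * RInt (Fi 1 a) 0 (INR n) - RInt (Fi 2 a) 0 (INR n))).
  { apply (is_RInt_minus (V:=R_NormedModule) (fun y => Fi 0 a y - 2 * a * Fi 1 a y) (Fi 2 a)).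
    apply (is_RInt_minus (V:=R_NormedModule) (Fi 0 a) (fun y => 2 * a * Fi 1 a y)).
    apply (RInt_correct (V:=R_CompleteNormedModule)); apply Fi_ex.
    apply (is_RInt_scal (V:=R_NormedModule) (Fi 1 a) 0 (INR n) (2*a)).
    apply (RInt_correct (V:=R_CompleteNormedModule)); apply Fi_ex.
    apply (RInt_correct (V:=R_CompleteNormedModule)); apply Fi_ex. }
  apply (is_RInt_unique (V:=R_CompleteNormedModule)) in H.
  apply (is_RInt_unique (V:=R_CompleteNormedModule)) in H2.
  rewrite H in H2. unfold minus, plus, opp in H2; simpl in H2.
  rewrite <- H2. ring.
Qed.
Lemma I_ibp a : Ik 2 a = Ik 0 a - 2 * a * Ik 1 a.
Proof.
  assert (H1 : is_lim_seq (fun n => Fn 0 n a - 2 * a * Fn 1 n a - Fn 2 n a) (Ik 0 a - 2 * a * Ik 1 a - Ik 2 a)).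
  { apply is_lim_seq_minus'. apply is_lim_seq_minus'. apply I_lim.
    exact (is_lim_seq_scal_l _ (2*a) _ (I_lim 1 a)). apply I_lim. }
  assert (H2 : is_lim_seq (fun n => Fn 0 n a - 2 * a * Fn 1 n a - Fn 2 n a) 0).
  { apply is_lim_seq_ext with (fun n => INR n * E a (INR n)). intros; symmetry; apply ibp_n.
    set (c := Rabs a).
    assert (Hc : 0 <= c) by apply Rabs_pos.
    assert (Ha : -c <= a) by (unfold c; generalize (Rcomplements.Rabs_maj2 a); lra).
    apply is_lim_seq_le_le with (fun _ => 0) (fun n => (exp (- a^2/2) * (Bk c 0 + Bk c 1)) * exp (- INR n)).
    intros n. assert (Hn := pos_INR n). assert (HE : 0 < E a (INR n)) by apply exp_pos.
    split. nra.
    assert (B0 := Fi_bound 0 c a (INR n) Hc Ha Hn).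
    assert (B1 := Fi_bound 1 c a (INR n) Hc Ha Hn).
    unfold Fi in B0, B1. replace (2*0)%nat with 0%nat in B0 by lia. replace (2*1)%nat with 2%nat in B1 by lia.
    rewrite pow_O in B0.
    assert (INR n <= 1 + INR n ^ 2) by nra.
    assert (INR n * E a (INR n) <= (1 + INR n ^ 2) * E a (INR n)) by (apply Rmult_le_compat_r; lra).
    lra.
    apply is_lim_seq_const. apply lim_exp_0. }
  assert (H := is_lim_seq_unique _ _ H1). rewrite (is_lim_seq_unique _ _ H2) in H.
  injection H. intros. lra.
Qed.

Definition U a := Ik 0 a.
Definition K a := Ik 1 a.

Lemma U_der a : is_derive U a (- a * U a - K a).
Proof. apply (I_deriv 0). Qed.

Lemma K_der a : is_derive K a (a * K a - U a).
Proof.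
  assert (H := I_deriv 1 a). rewrite I_ibp in H. unfold K, U.
  replace (a * Ik 1 a - Ik 0 a) with (- a * Ik 1 a - (Ik 0 a - 2 * a * Ik 1 a)) by ring. exact H.
Qed.

Lemma U_pos a : 0 < U a.
Proof. apply (I_bound 0 (Rabs a) a). apply Rabs_pos. generalize (Rcomplements.Rabs_maj2 a); lra. Qed.

Lemma K_pos a : 0 < K a.
Proof. apply (I_bound 1 (Rabs a) a). apply Rabs_pos. generalize (Rcomplements.Rabs_maj2 a); lra. Qed.

Lemma U_bnd c a : 0 <= c -> -c <= a -> U a <= exp (- a^2/2) * Bk c 0.
Proof. intros; apply (I_bound 0 c a); auto. Qed.

Lemma K_bnd c a : 0 <= c -> -c <= a -> K a <= exp (- a^2/2) * Bk c 1.
Proof. intros; apply (I_bound 1 c a); auto. Qed.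

Lemma U_ex a : ex_derive U a.
Proof. eexists; apply U_der. Qed.
Lemma K_ex a : ex_derive K a.
Proof. eexists; apply K_der. Qed.
Lemma U_D a : Derive U a = - a * U a - K a.
Proof. apply is_derive_unique, U_der. Qed.
Lemma K_D a : Derive K a = a * K a - U a.
Proof. apply is_derive_unique, K_der. Qed.
Lemma mono_incr f df a b : (forall x, a <= x <= b -> is_derive f x (df x)) ->
  (forall x, a <= x <= b -> 0 <= df x) -> a <= b -> f a <= f b.
Proof.
  intros Hd Hp Hab. destruct (MVT_gen f a b df) as [c [Hc Heq]].
  - intros x Hx. apply Hd. rewrite Rmin_left, Rmax_right in Hx by lra. lra.
  - intros x Hx. apply cpt_of_der. eexists; apply Hd. rewrite Rmin_left, Rmax_right in Hx by lra. lra.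
  - rewrite Rmin_left, Rmax_right in Hc by lra.
    assert (0 <= df c) by (apply Hp; lra). nra.
Qed.

Lemma mono_decr f df a b : (forall x, a <= x <= b -> is_derive f x (df x)) ->
  (forall x, a <= x <= b -> df x <= 0) -> a <= b -> f b <= f a.
Proof.
  intros Hd Hp Hab.
  assert (H := mono_incr (fun x => - f x) (fun x => - df x) a b).
  cut (- f a <= - f b). lra. apply H; auto.
  intros x Hx. apply (is_derive_opp (K:=R_AbsRing) (V:=R_NormedModule)). auto.
  intros x Hx. specialize (Hp x Hx). lra.
Qed.

Definition rapid (h : R -> R) := forall N : nat, exists C, forall t, 0 <= t -> Rabs (h t) * (1+t)^N <= C.

Lemma rapid_ext h g : (forall t, 0 <= t -> h t = g t) -> rapid h -> rapid g.
Proof. intros He Hh N. destruct (Hh N) as [C HC]. exists C. intros t Ht. rewrite <- He; auto. Qed.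

Lemma rapid_bounded h : rapid h -> exists B, forall t, 0 <= t -> Rabs (h t) <= B.
Proof. intros Hh. destruct (Hh 0%nat) as [C HC]. exists C. intros t Ht. specialize (HC t Ht). simpl in HC. lra. Qed.

Lemma rapid_lim h : rapid h -> filterlim h (Rbar_locally p_infty) (locally 0).
Proof.
  intros Hh. destruct (Hh 1%nat) as [C HC].
  apply filterlim_locally. intros eps.
  exists (Rmax 0 (C / eps)). intros t Ht.
  assert (Ht0 : 0 <= t) by (generalize (Rmax_l 0 (C/eps)); lra).
  assert (HtC : C / eps <= t) by (generalize (Rmax_r 0 (C/eps)); lra).
  change (Rabs (h t - 0) < eps). rewrite Rminus_0_r.
  specialize (HC t Ht0). simpl in HC. rewrite Rmult_1_r in HC.
  assert (Hep := cond_pos eps).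
  assert (C <= eps * t) by (apply Rmult_le_compat_l with (r := eps) in HtC; [|lra];
     unfold Rdiv in HtC; rewrite <- Rmult_assoc, (Rmult_comm eps C), Rmult_assoc, Rinv_r, Rmult_1_r in HtC; lra).
  assert (0 <= Rabs (h t)) by apply Rabs_pos.
  destruct (Rlt_or_le (Rabs (h t)) eps); auto. nra.
Qed.

Lemma rapid_mult_bnd h g : rapid h -> (exists B, forall t, 0 <= t -> Rabs (g t) <= B) ->
  rapid (fun t => h t * g t).
Proof.
  intros Hh [B HB] N. destruct (Hh N) as [C HC]. exists (C * B). intros t Ht.
  rewrite Rabs_mult. specialize (HC t Ht). specialize (HB t Ht).
  assert (0 <= Rabs (h t)) by apply Rabs_pos. assert (0 <= Rabs (g t)) by apply Rabs_pos.
  assert (0 <= (1+t)^N) by (apply pow_le; lra).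
  assert (0 <= Rabs (h t) * (1 + t) ^ N) by (apply Rmult_le_pos; auto).
  replace (Rabs (h t) * Rabs (g t) * (1 + t) ^ N) with ((Rabs (h t) * (1 + t) ^ N) * Rabs (g t)) by ring.
  apply Rmult_le_compat; auto.
Qed.

Lemma rapid_mult h g : rapid h -> rapid g -> rapid (fun t => h t * g t).
Proof. intros Hh Hg. apply rapid_mult_bnd; auto. apply rapid_bounded; auto. Qed.

Lemma rapid_plus h g : rapid h -> rapid g -> rapid (fun t => h t + g t).
Proof.
  intros Hh Hg N. destruct (Hh N) as [C1 H1]. destruct (Hg N) as [C2 H2]. exists (C1 + C2).
  intros t Ht. specialize (H1 t Ht). specialize (H2 t Ht).
  assert (0 <= (1+t)^N) by (apply pow_le; lra).
  assert (Rabs (h t + g t) * (1+t)^N <= (Rabs (h t) + Rabs (g t)) * (1+t)^N).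
  { apply Rmult_le_compat_r; auto. apply Rabs_triang. }
  lra.
Qed.

Lemma rapid_scal c h : rapid h -> rapid (fun t => c * h t).
Proof. intros Hh. apply (rapid_ext (fun t => h t * c)). intros; ring.
  apply rapid_mult_bnd; auto. exists (Rabs c). intros; lra. Qed.

Lemma rapid_minus h g : rapid h -> rapid g -> rapid (fun t => h t - g t).
Proof. intros Hh Hg. apply (rapid_ext (fun t => h t + (-1) * g t)). intros; ring.
  apply rapid_plus; auto. apply rapid_scal; auto. Qed.

Lemma rapid_tmul h : rapid h -> rapid (fun t => t * h t).
Proof.
  intros Hh N. destruct (Hh (S N)) as [C HC]. exists C. intros t Ht.
  specialize (HC t Ht). simpl in HC. rewrite Rabs_mult, (Rabs_pos_eq t Ht).
  assert (0 <= (1+t)^N) by (apply pow_le; lra).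
  assert (0 <= Rabs (h t)) by apply Rabs_pos.
  assert (t * Rabs (h t) * (1 + t) ^ N <= Rabs (h t) * ((1 + t) * (1 + t) ^ N)).
  { replace (Rabs (h t) * ((1 + t) * (1 + t) ^ N)) with ((1+t) * Rabs (h t) * (1 + t) ^ N) by ring.
    apply Rmult_le_compat_r; auto. nra. }
  lra.
Qed.

Lemma gauss_bound s N t : 0 <= s -> 0 <= t ->
  (1+t)^N * exp (- (t - s)^2/2) <= exp (INR N * s + INR N ^ 2 / 2).
Proof.
  intros Hs Ht. eapply Rle_trans. apply Rmult_le_compat_r. left; apply exp_pos.
  apply pow_incr. split. lra. apply exp_ineq1_le. rewrite exp_pow', <- exp_plus. apply exp_le'.
  assert (0 <= (t - s - INR N)^2) by apply pow2_ge_0. nra.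
Qed.

Lemma rapid_gauss (h : R -> R) s B : 0 <= s -> (forall t, 0 <= t -> Rabs (h t) <= exp (- (t - s)^2/2) * B) -> rapid h.
Proof.
  intros Hs Hh N. exists (exp (INR N * s + INR N ^ 2 / 2) * Rabs B). intros t Ht.
  specialize (Hh t Ht). assert (Hg := gauss_bound s N t Hs Ht).
  assert (0 <= (1+t)^N) by (apply pow_le; lra).
  apply Rle_trans with (exp (- (t - s) ^ 2 / 2) * Rabs B * (1 + t) ^ N).
  apply Rmult_le_compat_r; auto. eapply Rle_trans. apply Hh. apply Rmult_le_compat_l. left; apply exp_pos. apply Rle_abs.
  replace (exp (- (t - s) ^ 2 / 2) * Rabs B * (1 + t) ^ N) with (((1 + t) ^ N * exp (- (t - s) ^ 2 / 2)) * Rabs B) by ring.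
  apply Rmult_le_compat_r. apply Rabs_pos. auto.
Qed.

Lemma rapid_U s : 0 <= s -> rapid (fun t => U (t - s)).
Proof.
  intros Hs. apply rapid_gauss with s (Bk s 0); auto. intros t Ht.
  rewrite Rabs_pos_eq by (left; apply U_pos). apply U_bnd; lra.
Qed.

Lemma rapid_K s : 0 <= s -> rapid (fun t => K (t - s)).
Proof.
  intros Hs. apply rapid_gauss with s (Bk s 1); auto. intros t Ht.
  rewrite Rabs_pos_eq by (left; apply K_pos). apply K_bnd; lra.
Qed.
Definition hf x := U x ^ 2 - K x ^ 2 - 2 * x * U x * K x.

Lemma hf_der x : is_derive hf x (- 2 * U x * K x).
Proof.
  unfold hf. auto_derive. repeat split; auto using U_ex, K_ex.
  rewrite U_D, K_D. ring.
Qed.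

Lemma hf_nonneg a : 0 <= hf a.
Proof.
  destruct (Rle_or_lt 0 (hf a)) as [H|H]; auto. exfalso.
  assert (Hr : rapid hf).
  { apply (rapid_ext (fun t => U (t - 0) ^ 2 - K (t - 0) ^ 2 - 2 * t * U (t - 0) * K (t - 0))).
    intros t _. unfold hf. rewrite Rminus_0_r. ring.
    apply rapid_minus. apply rapid_minus.
    apply (rapid_ext (fun t => U (t - 0) * U (t - 0))). intros; ring.
    apply rapid_mult; apply rapid_U; lra.
    apply (rapid_ext (fun t => K (t - 0) * K (t - 0))). intros; ring.
    apply rapid_mult; apply rapid_K; lra.
    apply (rapid_ext (fun t => 2 * (t * (U (t - 0) * K (t - 0))))). intros; ring.
    apply rapid_scal, rapid_tmul, rapid_mult. apply rapid_U; lra. apply rapid_K; lra. }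
  assert (Hl := rapid_lim _ Hr).
  apply filterlim_locally with (eps := mkposreal (- hf a / 2) ltac:(lra)) in Hl.
  destruct Hl as [M HM]. set (b := Rmax (M + 1) (Rmax a 0)).
  assert (Hb1 : M < b) by (unfold b; generalize (Rmax_l (M+1) (Rmax a 0)); lra).
  assert (Hb2 : a <= b) by (unfold b; generalize (Rmax_r (M+1) (Rmax a 0)) (Rmax_l a 0); lra).
  specialize (HM b Hb1). change (Rabs (hf b - 0) < - hf a / 2) in HM.
  assert (Hd : hf b <= hf a).
  { apply (mono_decr hf (fun x => - 2 * U x * K x)); auto. intros; apply hf_der.
    intros x _. assert (H1 := U_pos x). assert (H2 := K_pos x). nra. }
  rewrite Rminus_0_r in HM. apply Rabs_def2 in HM. lra.
Qed.

Lemma K_le_U a : K a <= (1 + 2 * Rabs a) * U a.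
Proof.
  assert (H := hf_nonneg a). unfold hf in H. assert (H1 := U_pos a). assert (H2 := K_pos a).
  destruct (Rle_or_lt (K a) ((1 + 2 * Rabs a) * U a)) as [?|Hc]; auto. exfalso.
  assert (P1 : U a < K a) by (assert (0 <= Rabs a) by apply Rabs_pos; nra).
  assert (P2 : U a < K a + 2 * a * U a).
  { destruct (Rle_or_lt 0 a) as [Ha|Ha].
    - assert (0 <= a * U a) by (apply Rmult_le_pos; lra). lra.
    - rewrite Rabs_left in Hc by lra. nra. }
  assert (U a * U a < K a * (K a + 2 * a * U a)) by (apply Rmult_le_0_lt_compat; lra).
  nra.
Qed.

Definition wf x := x + K x / U x.

Lemma wf_der x : is_derive wf x ((K x / U x) * (2 * x + K x / U x)).
Proof.
  unfold wf. assert (H := U_pos x). auto_derive. repeat split; auto using U_ex, K_ex. lra.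
  rewrite U_D, K_D. field. lra.
Qed.

Lemma exists_neg : exists a, a < 0 /\ K a < - 2 * a * U a.
Proof.
  apply Classical_Prop.NNPP. intros Hn.
  assert (Hall : forall a, a <= 0 -> - 2 * a * U a <= K a).
  { intros a Ha. destruct (Rle_or_lt (- 2 * a * U a) (K a)) as [?|Hc]; auto.
    destruct (Req_dec a 0) as [->|Ha0]. assert (H := K_pos 0). lra.
    exfalso. apply Hn. exists a. split; [lra|lra]. }
  set (a1 := - (wf 0 + 1)).
  assert (Hw0 : wf 0 = K 0 / U 0) by (unfold wf; ring).
  assert (Hpos : 0 < K 0 / U 0) by (apply Rdiv_lt_0_compat; [apply K_pos|apply U_pos]).
  assert (Ha1 : a1 < 0) by (unfold a1; lra).
  assert (Hm : wf a1 <= wf 0).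
  { apply (mono_incr wf (fun x => (K x / U x) * (2 * x + K x / U x))).
    intros; apply wf_der.
    intros x Hx. assert (H1 := U_pos x). assert (H2 := K_pos x).
    assert (H3 := Hall x ltac:(lra)).
    assert (0 < K x / U x) by (apply Rdiv_lt_0_compat; auto).
    assert (- 2 * x <= K x / U x).
    { apply (Rmult_le_reg_r (U x)); auto. replace (K x / U x * U x) with (K x) by (field; lra). lra. }
    apply Rmult_le_pos; lra. lra. }
  assert (H1 := U_pos a1). assert (H3 := Hall a1 ltac:(lra)).
  assert (- 2 * a1 <= K a1 / U a1).
  { apply (Rmult_le_reg_r (U a1)); auto. replace (K a1 / U a1 * U a1) with (K a1) by (field; lra). lra. }
  unfold wf at 1 in Hm. unfold a1 in *. lra.
Qed.

Lemma exists_root : exists al, 0 < al /\ K (- al) = 2 * al * U (- al).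
Proof.
  destruct exists_neg as [a [Ha HK]].
  set (F := fun x => 2 * x * U (- x) - K (- x)).
  assert (Fc : continuity F).
  { intros x. apply cpt_of_der. unfold F. auto_derive. repeat split; auto using U_ex, K_ex. }
  destruct (IVT F 0 (- a) Fc) as [z [Hz Fz]]. lra.
  unfold F. rewrite Ropp_0. assert (H := K_pos 0). lra.
  unfold F. rewrite Ropp_involutive. lra.
  assert (z <> 0). { intros ->. unfold F in Fz. rewrite Ropp_0 in Fz. assert (H := K_pos 0). lra. }
  exists z. split. lra. unfold F in Fz. lra.
Qed.

Definition psi x := 2 * x * U x * K x + K x ^ 2.

Lemma psi_der x : is_derive psi x (- 2 * x * U x ^ 2).
Proof. unfold psi. auto_derive. repeat split; auto using U_ex, K_ex. rewrite U_D, K_D. ring. Qed.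

Lemma psi_bound al a : 0 < al -> K (- al) = 2 * al * U (- al) -> - al <= a ->
  - U a ^ 2 <= psi a <= U a ^ 2.
Proof.
  intros Hal Hroot Ha. split.
  - destruct (Rle_or_lt 0 a) as [Ha0|Ha0].
    + unfold psi. assert (H1 := U_pos a). assert (H2 := K_pos a).
      assert (0 <= a * U a * K a) by (apply Rmult_le_pos; [apply Rmult_le_pos|]; lra). nra.
    + assert (psi (- al) <= psi a).
      { apply (mono_incr psi (fun x => - 2 * x * U x ^ 2)). intros; apply psi_der.
        intros x Hx. assert (0 <= U x ^ 2) by apply pow2_ge_0. nra. auto. }
      assert (psi (- al) = 0) by (unfold psi; rewrite Hroot; ring).
      assert (0 <= U a ^ 2) by apply pow2_ge_0. lra.
  - assert (H := hf_nonneg a). unfold hf, psi in *. lra.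
Qed.
Lemma int_antider (F g : R -> R) v : (forall t, is_derive F t (g t)) -> (forall t, ex_derive g t) ->
  filterlim F (Rbar_locally p_infty) (locally 0) -> v = - F 0 -> int_0_oo g v.
Proof.
  intros Hd Hc Hl ->. unfold int_0_oo.
  apply (is_RInt_gen_ext (Derive F)).
  apply filter_forall. intros [x y] z _. simpl. apply (is_derive_unique F z (g z)). apply Hd.
  replace (- F 0) with (0 - F 0) by ring.
  apply is_RInt_gen_Derive.
  apply filter_forall. intros _ x _. eexists; apply Hd.
  apply filter_forall. intros _ x _. apply (continuous_ext g). intros; symmetry; apply is_derive_unique, Hd.
  apply (ex_derive_continuous (V:=R_NormedModule)). apply Hc.
  intros P HP. exact (locally_singleton _ _ HP).
  auto.
Qed.
Definition fS al t := U (t - al) / U (- al).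
Definition fpS al t := (- (t - al) * U (t - al) - K (t - al)) / U (- al).

Lemma fS_der al t : is_derive (fS al) t (fpS al t).
Proof.
  unfold fS, fpS. assert (H := U_pos (- al)). auto_derive. apply U_ex.
  rewrite U_D. unfold Rminus. field. lra.
Qed.

Lemma fpS_der al t : is_derive (fpS al) t ((t - al)^2 * fS al t).
Proof.
  unfold fS, fpS. assert (H := U_pos (- al)). auto_derive. repeat split; auto using U_ex, K_ex.
  rewrite U_D, K_D. unfold Rminus. field. lra.
Qed.

Lemma fS_ex al t : ex_derive (fS al) t.
Proof. eexists; apply fS_der. Qed.
Lemma fpS_ex al t : ex_derive (fpS al) t.
Proof. eexists; apply fpS_der. Qed.
Lemma fS_D al t : Derive (fS al) t = fpS al t.
Proof. apply is_derive_unique, fS_der. Qed.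
Lemma fpS_D al t : Derive (fpS al) t = (t - al)^2 * fS al t.
Proof. apply is_derive_unique, fpS_der. Qed.
Lemma fS_Dfun al : Derive (fS al) = fpS al.
Proof. apply FunctionalExtensionality.functional_extensionality. apply fS_D. Qed.

Lemma fS_pos al t : 0 < fS al t.
Proof. unfold fS. apply Rdiv_lt_0_compat; apply U_pos. Qed.

Lemma fS_0 al : fS al 0 = 1.
Proof. unfold fS. rewrite Rminus_0_l. field. assert (H := U_pos (- al)). lra. Qed.

Lemma fpS_0 al : K (- al) = 2 * al * U (- al) -> fpS al 0 = - al.
Proof. intros Hr. unfold fpS. rewrite Rminus_0_l, Hr. field. assert (H := U_pos (- al)). lra. Qed.

Lemma rapid_fS al : 0 <= al -> rapid (fS al).
Proof.
  intros H. apply (rapid_ext (fun t => / U (- al) * U (t - al))). intros; unfold fS, Rdiv; ring.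
  apply rapid_scal, rapid_U; auto.
Qed.

Lemma rapid_fpS al : 0 <= al -> rapid (fpS al).
Proof.
  intros H. apply (rapid_ext (fun t => / U (- al) * ((- 1) * (t * U (t - al)) + al * U (t - al) + (-1) * K (t - al)))).
  intros; unfold fpS, Rdiv; ring.
  apply rapid_scal. apply rapid_plus. apply rapid_plus.
  apply rapid_scal, rapid_tmul, rapid_U; auto. apply rapid_scal, rapid_U; auto. apply rapid_scal, rapid_K; auto.
Qed.

Lemma rapid_t2 h : rapid h -> rapid (fun t => t^2 * h t).
Proof. intros H. apply (rapid_ext (fun t => t * (t * h t))). intros; ring. do 2 apply rapid_tmul; auto. Qed.

Ltac solve_rapid_prod al Hal :=
  let HA := fresh in let HB := fresh in
  assert (HA := rapid_fS al Hal); assert (HB := rapid_fpS al Hal);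
  repeat first [ apply rapid_plus | apply rapid_minus | apply rapid_scal | apply rapid_mult | apply rapid_tmul | assumption ].
Lemma rapid_apow al n h : rapid h -> rapid (fun t => (t - al)^n * h t).
Proof.
  intros H. induction n as [|n IH].
  - apply (rapid_ext h). intros; simpl; ring. auto.
  - apply (rapid_ext (fun t => t * ((t - al)^n * h t) + (- al) * ((t - al)^n * h t))).
    intros; simpl; ring.
    apply rapid_plus. apply rapid_tmul; auto. apply rapid_scal; auto.
Qed.

Ltac rapid_tac al Hal :=
  let HA := fresh in let HB := fresh in
  assert (HA := rapid_fS al (Rlt_le _ _ Hal)); assert (HB := rapid_fpS al (Rlt_le _ _ Hal));
  repeat first [ assumption | apply rapid_plus | apply rapid_scal | apply rapid_apow | apply rapid_mult ].

Ltac der_tac al :=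
  intros t; auto_derive; [repeat split; auto using fS_ex, fpS_ex|];
  rewrite ?fS_D, ?fpS_D; field.

Ltac ex_tac := intros t; auto_derive; repeat split; auto using fS_ex, fpS_ex.


Lemma int_ii al (Hal : 0 < al) (Hr : K (- al) = 2 * al * U (- al)) :
  int_0_oo (fun t => fpS al t ^ 2 + (t - al)^2 * fS al t ^ 2) al.
Proof.
  apply (int_antider (fun t => fS al t * fpS al t)).
  der_tac al. ex_tac. apply rapid_lim. rapid_tac al Hal.
  rewrite fS_0, fpS_0; auto. ring.
Qed.

Lemma int_iii1 al (Hal : 0 < al) (Hr : K (- al) = 2 * al * U (- al)) :
  int_0_oo (fun t => (t - al) * fS al t ^ 2) 0.
Proof.
  apply (int_antider (fun t => (- / 2) * (fpS al t * fpS al t) + / 2 * ((t - al)^2 * (fS al t * fS al t)))).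
  der_tac al. ex_tac. apply rapid_lim. rapid_tac al Hal.
  rewrite fS_0, fpS_0; auto. field.
Qed.

Lemma int_iii2 al (Hal : 0 < al) (Hr : K (- al) = 2 * al * U (- al)) :
  int_0_oo (fun t => (t - al)^2 * fS al t ^ 2) (al / 4).
Proof.
  apply (int_antider (fun t => (- / 4) * ((t - al)^1 * (fpS al t * fpS al t))
     + / 4 * ((t - al)^3 * (fS al t * fS al t)) + / 4 * (fS al t * fpS al t))).
  der_tac al. ex_tac. apply rapid_lim. rapid_tac al Hal.
  rewrite fS_0, fpS_0; auto. field.
Qed.

Lemma int_iii3 al (Hal : 0 < al) (Hr : K (- al) = 2 * al * U (- al)) :
  int_0_oo (fun t => (t - al)^3 * fS al t ^ 2) (/ 6 * (1 - 2 * al ^ 2)).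
Proof.
  apply (int_antider (fun t => / 3 * ((t - al)^1 * (fS al t * fpS al t))
     + (- / 6) * (fS al t * fS al t) + (- / 6) * ((t - al)^2 * (fpS al t * fpS al t))
     + / 6 * ((t - al)^4 * (fS al t * fS al t)))).
  der_tac al. ex_tac. apply rapid_lim. rapid_tac al Hal.
  rewrite fS_0, fpS_0; auto. field.
Qed.

Lemma int_iv1 al (Hal : 0 < al) (Hr : K (- al) = 2 * al * U (- al)) :
  int_0_oo (fun t => fpS al t * fS al t) (- / 2).
Proof.
  apply (int_antider (fun t => / 2 * (fS al t * fS al t))).
  der_tac al. ex_tac. apply rapid_lim. rapid_tac al Hal.
  rewrite fS_0. field.
Qed.

Lemma int_iv2 al (Hal : 0 < al) (Hr : K (- al) = 2 * al * U (- al)) :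
  int_0_oo (fun t => t * fpS al t ^ 2) (/ 3 + al ^ 2 / 12).
Proof.
  apply (int_antider (fun t => (2/3) * ((t - al)^1 * (fS al t * fpS al t))
     + (- / 3) * (fS al t * fS al t) + / 6 * ((t - al)^2 * (fpS al t * fpS al t))
     + (- / 6) * ((t - al)^4 * (fS al t * fS al t)) + (3 * al / 4) * (fS al t * fpS al t)
     + (al / 4) * ((t - al)^1 * (fpS al t * fpS al t)) + (- al / 4) * ((t - al)^3 * (fS al t * fS al t)))).
  der_tac al. ex_tac. apply rapid_lim. rapid_tac al Hal.
  rewrite fS_0, fpS_0; auto. field.
Qed.
Inductive is_poly : (R -> R) -> Prop :=
| ip_const c : is_poly (fun _ => c)
| ip_id : is_poly (fun x => x)
| ip_add p q : is_poly p -> is_poly q -> is_poly (fun x => p x + q x)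
| ip_mul p q : is_poly p -> is_poly q -> is_poly (fun x => p x * q x).

Lemma poly_der p : is_poly p -> exists p', is_poly p' /\ forall x, is_derive p x (p' x).
Proof.
  induction 1 as [c| |p q Hp [p' [Hp' Dp]] Hq [q' [Hq' Dq]]|p q Hp [p' [Hp' Dp]] Hq [q' [Hq' Dq]]].
  - exists (fun _ => 0). split. constructor. intros x. auto_derive; auto.
  - exists (fun _ => 1). split. constructor. intros x. auto_derive; auto.
  - exists (fun x => p' x + q' x). split. constructor; auto.
    intros x. auto_derive. refine (conj (ex_intro _ _ (Dp x)) (conj (ex_intro _ _ (Dq x)) I)).
    assert (E1 : Derive (fun y : R => p y) x = p' x) by (apply is_derive_unique; apply Dp).
    assert (E2 : Derive (fun y : R => q y) x = q' x) by (apply is_derive_unique; apply Dq).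
    rewrite E1, E2. ring.
  - exists (fun x => p' x * q x + p x * q' x). split. constructor; constructor; auto.
    intros x. auto_derive. refine (conj (ex_intro _ _ (Dp x)) (conj (ex_intro _ _ (Dq x)) I)).
    assert (E1 : Derive (fun y : R => p y) x = p' x) by (apply is_derive_unique; apply Dp).
    assert (E2 : Derive (fun y : R => q y) x = q' x) by (apply is_derive_unique; apply Dq).
    rewrite E1, E2. ring.
Qed.

Lemma poly_bound p : is_poly p -> exists A d, forall t, 0 <= t -> Rabs (p t) <= A * (1+t)^d.
Proof.
  induction 1 as [c| |p q Hp [A1 [d1 B1]] Hq [A2 [d2 B2]]|p q Hp [A1 [d1 B1]] Hq [A2 [d2 B2]]].
  - exists (Rabs c), 0%nat. intros; simpl; lra.
  - exists 1, 1%nat. intros t Ht. rewrite Rabs_pos_eq; simpl; lra.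
  - exists (Rabs A1 + Rabs A2), (d1 + d2)%nat. intros t Ht.
    specialize (B1 t Ht). specialize (B2 t Ht).
    assert (H1 : (1+t)^d1 <= (1+t)^(d1+d2)) by (apply Rle_pow; lia || lra).
    assert (H2 : (1+t)^d2 <= (1+t)^(d1+d2)) by (apply Rle_pow; lia || lra).
    assert (0 <= (1+t)^d1) by (apply pow_le; lra). assert (0 <= (1+t)^d2) by (apply pow_le; lra).
    assert (A1 * (1+t)^d1 <= Rabs A1 * (1+t)^(d1+d2)).
    { apply Rle_trans with (Rabs A1 * (1+t)^d1). apply Rmult_le_compat_r; auto. apply Rle_abs.
      apply Rmult_le_compat_l; auto. apply Rabs_pos. }
    assert (A2 * (1+t)^d2 <= Rabs A2 * (1+t)^(d1+d2)).
    { apply Rle_trans with (Rabs A2 * (1+t)^d2). apply Rmult_le_compat_r; auto. apply Rle_abs.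
      apply Rmult_le_compat_l; auto. apply Rabs_pos. }
    eapply Rle_trans. apply Rabs_triang. lra.
  - exists (Rabs A1 * Rabs A2), (d1 + d2)%nat. intros t Ht.
    specialize (B1 t Ht). specialize (B2 t Ht). rewrite Rabs_mult, pow_add.
    assert (0 <= (1+t)^d1) by (apply pow_le; lra). assert (0 <= (1+t)^d2) by (apply pow_le; lra).
    replace (Rabs A1 * Rabs A2 * ((1 + t) ^ d1 * (1 + t) ^ d2)) with
      ((Rabs A1 * (1 + t) ^ d1) * (Rabs A2 * (1 + t) ^ d2)) by ring.
    apply Rmult_le_compat; try apply Rabs_pos.
    eapply Rle_trans. apply B1. apply Rmult_le_compat_r; auto. apply Rle_abs.
    eapply Rle_trans. apply B2. apply Rmult_le_compat_r; auto. apply Rle_abs.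
Qed.

Lemma rapid_poly p h : is_poly p -> rapid h -> rapid (fun t => p t * h t).
Proof.
  intros Hp Hh N. destruct (poly_bound p Hp) as [A [d Hb]]. destruct (Hh (d + N)%nat) as [C HC].
  exists (Rabs A * C). intros t Ht. specialize (Hb t Ht). specialize (HC t Ht).
  rewrite pow_add in HC. rewrite Rabs_mult.
  assert (0 <= (1+t)^d) by (apply pow_le; lra). assert (0 <= (1+t)^N) by (apply pow_le; lra).
  assert (0 <= Rabs (h t)) by apply Rabs_pos.
  apply Rle_trans with ((Rabs A * (1+t)^d) * Rabs (h t) * (1+t)^N).
  apply Rmult_le_compat_r; auto. apply Rmult_le_compat_r; auto.
  eapply Rle_trans. apply Hb. apply Rmult_le_compat_r; auto. apply Rle_abs.
  replace (Rabs A * (1 + t) ^ d * Rabs (h t) * (1 + t) ^ N) with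
    (Rabs A * (Rabs (h t) * ((1 + t) ^ d * (1 + t) ^ N))) by ring.
  apply Rmult_le_compat_l; auto. apply Rabs_pos.
Qed.

Definition SC al (h : R -> R) := exists p q, is_poly p /\ is_poly q /\
  forall t, h t = p t * fS al t + q t * fpS al t.

Lemma SC_der al h : SC al h -> (forall t, ex_derive h t) /\ SC al (Derive h).
Proof.
  intros [p [q [Hp [Hq Hh]]]].
  destruct (poly_der p Hp) as [p' [Hp' Dp]]. destruct (poly_der q Hq) as [q' [Hq' Dq]].
  assert (D : forall t, is_derive h t ((p' t + q t * ((t + - al) * (t + - al))) * fS al t + (p t + q' t) * fpS al t)).
  { intros t. apply is_derive_ext with (fun t => p t * fS al t + q t * fpS al t). intros; symmetry; auto.
    auto_derive. refine (conj (ex_intro _ _ (Dp t)) (conj (fS_ex al t) (conj (ex_intro _ _ (Dq t)) (conj (fpS_ex al t) I)))).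
    assert (E1 : Derive (fun y : R => p y) t = p' t) by (apply is_derive_unique; apply Dp).
    assert (E2 : Derive (fun y : R => q y) t = q' t) by (apply is_derive_unique; apply Dq).
    rewrite E1, E2, fS_D, fpS_D.
    unfold Rminus. ring. }
  split. intros t; eexists; apply D.
  exists (fun t => p' t + q t * ((t + - al) * (t + - al))), (fun t => p t + q' t).
  split. apply ip_add; auto. apply ip_mul; auto. apply ip_mul; apply ip_add; [apply ip_id|apply ip_const|apply ip_id|apply ip_const].
  split. apply ip_add; auto.
  intros t. apply is_derive_unique. apply D.
Qed.

Lemma SC_Dn al n : SC al (Derive_n (fS al) n).
Proof.
  induction n as [|n IH].
  - exists (fun _ => 1), (fun _ => 0). split. apply ip_const. split. apply ip_const.
    intros t. simpl. ring.
  - destruct (SC_der al _ IH) as [_ H]. exact H.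
Qed.

Lemma schwartz_fS al : 0 <= al -> schwartz_halfline (fS al).
Proof.
  intros Hal. unfold schwartz_halfline. split.
  - intros n x. apply (SC_der al _ (SC_Dn al n)).
  - intros k n. destruct (SC_Dn al n) as [p [q [Hp [Hq Hh]]]].
    assert (Hr : rapid (Derive_n (fS al) n)).
    { apply (rapid_ext (fun t => p t * fS al t + q t * fpS al t)). intros; symmetry; auto.
      apply rapid_plus; apply rapid_poly; auto. apply rapid_fS; auto. apply rapid_fpS; auto. }
    destruct (Hr k) as [C HC]. exists C. intros t Ht. specialize (HC t Ht).
    rewrite Rabs_mult, <- RPow_abs, Rabs_pos_eq by lra.
    assert (0 <= Rabs (Derive_n (fS al) n t)) by apply Rabs_pos.
    assert (t^k <= (1+t)^k) by (apply pow_incr; lra).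
    assert (t ^ k * Rabs (Derive_n (fS al) n t) <= Rabs (Derive_n (fS al) n t) * (1 + t) ^ k).
    { rewrite Rmult_comm. apply Rmult_le_compat_l; auto. }
    lra.
Qed.
Lemma pow_1pt N t : 0 <= t -> (1 + t)^N <= 2^N * (1 + t^N).
Proof.
  intros Ht. destruct (Rle_or_lt t 1) as [H|H].
  - eapply Rle_trans. apply (pow_incr (1+t) 2). lra.
    assert (0 <= t^N) by (apply pow_le; lra). assert (0 <= 2^N) by (apply pow_le; lra). nra.
  - eapply Rle_trans. apply (pow_incr (1+t) (2*t)). lra. rewrite Rpow_mult_distr.
    assert (0 <= t^N) by (apply pow_le; lra). assert (0 <= 2^N) by (apply pow_le; lra). nra.
Qed.

Lemma rapid_schwartz g : schwartz_halfline g -> rapid g.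
Proof.
  intros [_ Hb] N. destruct (Hb 0%nat 0%nat) as [C0 H0]. destruct (Hb N 0%nat) as [C1 H1].
  exists (2^N * (C0 + C1)). intros t Ht. specialize (H0 t Ht). specialize (H1 t Ht).
  simpl in H0, H1. rewrite Rmult_1_l in H0. rewrite Rabs_mult, <- RPow_abs, Rabs_pos_eq in H1 by lra.
  assert (0 <= Rabs (g t)) by apply Rabs_pos. assert (0 <= 2^N) by (apply pow_le; lra).
  eapply Rle_trans. apply Rmult_le_compat_l. auto. apply pow_1pt; auto.
  assert (Rabs (g t) * (2 ^ N * (1 + t ^ N)) = 2^N * (Rabs (g t) + t^N * Rabs (g t))) by ring.
  rewrite H3. apply Rmult_le_compat_l; auto. lra.
Qed.

Lemma rapid_dom h1 h2 : rapid h1 -> (forall t, 0 <= t -> Rabs (h2 t) <= Rabs (h1 t)) -> rapid h2.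
Proof.
  intros H Hd N. destruct (H N) as [C HC]. exists C. intros t Ht. specialize (HC t Ht).
  assert (0 <= (1+t)^N) by (apply pow_le; lra).
  eapply Rle_trans. 2: apply HC. apply Rmult_le_compat_r; auto.
Qed.
Definition rr al t := K (t - al) / U (t - al).
Definition rp al t := rr al t ^ 2 + 2 * (t - al) * rr al t - 1.
Definition Sf al xi t := - ((t - al) + rr al t) - (al - xi) * rr al t * (2 * (t - al) + rr al t).
Definition Spf al xi t := - (1 + rp al t) - (al - xi) * (rp al t * (2 * (t - al) + rr al t) + rr al t * (2 + rp al t)).
Definition Gf al xi (g : R -> R) t := g t ^ 2 * Sf al xi t.
Definition Gpf al xi (g : R -> R) t := 2 * g t * Derive g t * Sf al xi t + g t ^ 2 * Spf al xi t.

Lemma rr_der al t : is_derive (rr al) t (rp al t).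
Proof.
  unfold rp, rr. assert (H := U_pos (t - al)). auto_derive.
  refine (conj (K_ex _) (conj (U_ex _) (conj _ I))). unfold Rminus in H. lra.
  rewrite U_D, K_D. unfold Rminus in *. field. lra.
Qed.
Lemma rr_ex al t : ex_derive (rr al) t.
Proof. eexists; apply rr_der. Qed.

Lemma Sf_der al xi t : is_derive (Sf al xi) t (Spf al xi t).
Proof.
  unfold Sf, Spf. auto_derive. refine (conj (rr_ex al t) (conj (rr_ex al t) (conj (rr_ex al t) I))).
  assert (E : Derive (fun x => rr al x) t = rp al t) by (apply is_derive_unique, rr_der). rewrite E. ring.
Qed.
Lemma Sf_ex al xi t : ex_derive (Sf al xi) t.
Proof. eexists; apply Sf_der. Qed.

Lemma Spf_ex al xi t : ex_derive (Spf al xi) t.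
Proof.
  unfold Spf, rp. auto_derive. repeat apply conj; try exact I; apply rr_ex.
Qed.

Lemma Gf_der al xi g t : (forall x, ex_derive g x) -> is_derive (Gf al xi g) t (Gpf al xi g t).
Proof.
  intros Hg. unfold Gf, Gpf. auto_derive. refine (conj (Hg t) (conj (Sf_ex al xi t) I)).
  assert (E : Derive (fun x => Sf al xi x) t = Spf al xi t) by (apply is_derive_unique, Sf_der).
  assert (Eg : Derive (fun x => g x) t = Derive g t) by reflexivity.
  rewrite E, Eg. ring.
Qed.

Lemma Gpf_ex al xi g t : (forall x, ex_derive g x) -> (forall x, ex_derive (Derive g) x) ->
  ex_derive (Gpf al xi g) t.
Proof.
  intros Hg Hg'. unfold Gpf. auto_derive.
  refine (conj (Hg t) (conj (Hg' t) (conj (Sf_ex al xi t) (conj (Hg t) (conj (Spf_ex al xi t) I))))).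
Qed.

Lemma key_identity al xi g t :
  (Derive g t ^ 2 + (t - xi) ^ 2 * g t ^ 2) - Gpf al xi g t =
  (Derive g t + ((t - al) + rr al t) * g t + (al - xi) * rr al t * (2 * (t - al) + rr al t) * g t) ^ 2
  + (al - xi) ^ 2 * g t ^ 2 * (1 - (rr al t * (2 * (t - al) + rr al t)) ^ 2).
Proof. unfold Gpf, Spf, Sf, rp. ring. Qed.

Lemma rr_bound al t : 0 < al -> K (- al) = 2 * al * U (- al) -> 0 <= t ->
  (rr al t * (2 * (t - al) + rr al t)) ^ 2 <= 1.
Proof.
  intros Hal Hr Ht. assert (H := psi_bound al (t - al) Hal Hr ltac:(lra)).
  unfold psi in H. unfold rr. assert (Hu := U_pos (t - al)).
  set (u := U (t - al)) in *. set (k := K (t - al)) in *.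
  assert (E : k / u * (2 * (t - al) + k / u) = (2 * (t - al) * u * k + k ^ 2) / u ^ 2) by (field; lra).
  rewrite E. set (p := 2 * (t - al) * u * k + k ^ 2) in *.
  assert (0 < u^2) by nra.
  assert (-1 <= p / u^2 <= 1).
  { split. apply (Rmult_le_reg_r (u^2)); auto. replace (p / u^2 * u^2) with p by (field; lra). lra.
    apply (Rmult_le_reg_r (u^2)); auto. replace (p / u^2 * u^2) with p by (field; lra). lra. }
  nra.
Qed.

Lemma Sf_bound al xi t : 0 < al -> K (- al) = 2 * al * U (- al) -> 0 <= t ->
  Rabs (Sf al xi t) <= 3 * t + (3 * al + 1 + Rabs (al - xi)).
Proof.
  intros Hal Hr Ht. assert (H1 := rr_bound al t Hal Hr Ht).
  assert (H2 := K_le_U (t - al)). assert (Hu := U_pos (t - al)). assert (Hk := K_pos (t - al)).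
  assert (Hr0 : 0 <= rr al t) by (unfold rr; left; apply Rdiv_lt_0_compat; auto).
  assert (Hr1 : rr al t <= 1 + 2 * Rabs (t - al)).
  { unfold rr. apply (Rmult_le_reg_r (U (t - al))); auto. replace (K (t - al) / U (t - al) * U (t - al)) with (K (t - al)) by (field; lra). lra. }
  assert (Ha : Rabs (t - al) <= t + al) by (apply Rabs_le; lra).
  assert (HX : Rabs (rr al t * (2 * (t - al) + rr al t)) <= 1).
  { set (X := rr al t * (2 * (t - al) + rr al t)) in *. apply Rabs_le; split; nra. }
  unfold Sf. eapply Rle_trans. apply Rabs_triang. rewrite Rabs_Ropp.
  eapply Rle_trans. apply Rplus_le_compat. apply Rabs_triang. rewrite Rabs_Ropp.
  rewrite Rmult_assoc, Rabs_mult. apply Rle_refl.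
  rewrite (Rabs_pos_eq (rr al t)) by auto.
  assert (Rabs (al - xi) * Rabs (rr al t * (2 * (t - al) + rr al t)) <= Rabs (al - xi)).
  { rewrite <- (Rmult_1_r (Rabs (al - xi))) at 2. apply Rmult_le_compat_l. apply Rabs_pos. auto. }
  lra.
Qed.

Lemma lower_bound al g xi r : 0 < al -> K (- al) = 2 * al * U (- al) ->
  schwartz_halfline g -> g 0 <> 0 ->
  is_RInt_gen (fun t => Derive g t ^ 2 + (t - xi) ^ 2 * g t ^ 2) (at_point 0) (Rbar_locally p_infty) (r * g 0 ^ 2) ->
  al <= r.
Proof.
  intros Hal Hr Hs Hg0 HI.
  assert (Hgd : forall x, ex_derive g x) by (intros x; exact (proj1 Hs 0%nat x)).
  assert (Hgd' : forall x, ex_derive (Derive g) x) by (intros x; exact (proj1 Hs 1%nat x)).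
  assert (Hg02 : 0 < g 0 ^ 2) by (apply pow2_gt_0; auto).
  assert (HGl : filterlim (Gf al xi g) (Rbar_locally p_infty) (locally 0)).
  { apply rapid_lim. assert (Hrg := rapid_schwartz g Hs).
    apply rapid_dom with (fun t => 3 * (t * (g t * g t)) + (3 * al + 1 + Rabs (al - xi)) * (g t * g t)).
    apply rapid_plus. apply rapid_scal, rapid_tmul, rapid_mult; auto. apply rapid_scal, rapid_mult; auto.
    intros t Ht. unfold Gf. rewrite Rabs_mult. assert (HS := Sf_bound al xi t Hal Hr Ht).
    assert (0 <= g t * g t) by nra. assert (0 <= Rabs (al - xi)) by apply Rabs_pos.
    rewrite (Rabs_pos_eq (g t ^ 2)) by nra.
    rewrite (Rabs_pos_eq (3 * (t * (g t * g t)) + (3 * al + 1 + Rabs (al - xi)) * (g t * g t))) by nra.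
    replace (g t ^ 2) with (g t * g t) by ring.
    replace (3 * (t * (g t * g t)) + (3 * al + 1 + Rabs (al - xi)) * (g t * g t)) with
      ((g t * g t) * (3 * t + (3 * al + 1 + Rabs (al - xi)))) by ring.
    apply Rmult_le_compat_l; auto. }
  assert (HG0 : Gf al xi g 0 = - al * g 0 ^ 2).
  { unfold Gf, Sf, rr. rewrite Rminus_0_l, Hr. field. assert (H := U_pos (- al)). lra. }
  destruct (Rle_or_lt al r) as [?|Hlt]; auto. exfalso.
  set (L := r * g 0 ^ 2). set (eps := (al * g 0 ^ 2 - L) / 3).
  assert (Heps : 0 < eps) by (unfold eps, L; nra).
  assert (HI2 := HI (ball L eps) (locally_ball L (mkposreal eps Heps))).
  destruct HI2 as [Q1 R1 HQ HR Hall].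
  destruct HR as [M HM].
  destruct (proj1 (filterlim_locally _ _) HGl (mkposreal eps Heps)) as [M2 HM2].
  set (b := Rmax (Rmax M M2) 0 + 1).
  assert (Hb : M < b /\ M2 < b /\ 0 < b).
  { unfold b. generalize (Rmax_l (Rmax M M2) 0) (Rmax_r (Rmax M M2) 0) (Rmax_l M M2) (Rmax_r M M2). lra. }
  destruct (Hall 0 b HQ (HM b ltac:(lra))) as [y [Hy Hby]]. simpl in Hy.
  specialize (HM2 b ltac:(lra)). change (Rabs (Gf al xi g b - 0) < eps) in HM2.
  change (Rabs (y - L) < eps) in Hby.
  assert (HGp : is_RInt (Gpf al xi g) 0 b (Gf al xi g b - Gf al xi g 0)).
  { apply (is_RInt_derive (V:=R_CompleteNormedModule) (Gf al xi g) (Gpf al xi g)).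
    intros; apply Gf_der; auto.
    intros x _. apply (ex_derive_continuous (V:=R_NormedModule)). apply Gpf_ex; auto. }
  assert (Hdiff := is_RInt_minus (V:=R_NormedModule) _ _ 0 b _ _ Hy HGp).
  assert (Hpos : 0 <= minus y (Gf al xi g b - Gf al xi g 0)).
  { eapply is_RInt_ge_0. 2: exact Hdiff. lra.
    intros x Hx. unfold minus, plus, opp; simpl.
    change (0 <= (Derive g x ^ 2 + (x - xi) ^ 2 * g x ^ 2) - Gpf al xi g x).
    rewrite key_identity.
    assert (H1 := rr_bound al x Hal Hr ltac:(lra)).
    apply Rplus_le_le_0_compat. apply pow2_ge_0.
    apply Rmult_le_pos. apply Rmult_le_pos; apply pow2_ge_0. lra. }
  unfold minus, plus, opp in Hpos; simpl in Hpos.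
  rewrite Rminus_0_r in HM2. apply Rabs_def2 in HM2. apply Rabs_def2 in Hby.
  rewrite HG0 in Hpos. unfold eps, L in *. nra.
Qed.

Theorem proposition2p1 :
  exists f : R -> R,
    schwartz_halfline f /\
    (* (i) *)
    (forall t : R, 0 < t -> 0 < f t) /\ f 0 = 1 /\
    (* (ii) *)
    int_0_oo (fun t => (Derive f t) ^ 2 + (t - alpha_hat) ^ 2 * (f t) ^ 2)
             alpha_hat /\
    (* (iii) *)
    int_0_oo (fun t => (t - alpha_hat) * (f t) ^ 2) 0 /\
    int_0_oo (fun t => (t - alpha_hat) ^ 2 * (f t) ^ 2) (alpha_hat / 4) /\
    int_0_oo (fun t => (t - alpha_hat) ^ 3 * (f t) ^ 2)
             (/ 6 * (1 - 2 * alpha_hat ^ 2)) /\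
    (* (iv) *)
    int_0_oo (fun t => Derive f t * f t) (- / 2) /\
    int_0_oo (fun t => t * (Derive f t) ^ 2) (/ 3 + alpha_hat ^ 2 / 12).
Proof.
  destruct exists_root as [al [Hal Hr]].
  assert (Ha : alpha_hat = al).
  { unfold alpha_hat. rewrite (is_glb_Rbar_unique _ al). reflexivity.
    split.
    - intros x [g [xi [Hs [Hg0 HI]]]]. simpl. apply (lower_bound al g xi x); auto.
    - intros b Hb. apply Hb. exists (fS al), al. split. apply (schwartz_fS al (Rlt_le _ _ Hal)).
      split. rewrite fS_0; lra. rewrite fS_Dfun, fS_0.
      replace (al * 1 ^ 2) with al by ring. apply int_ii; auto. }
  rewrite Ha. exists (fS al). rewrite fS_Dfun.
  split. apply (schwartz_fS al (Rlt_le _ _ Hal)).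
  split. intros; apply fS_pos.
  split. apply fS_0.
  split. apply int_ii; auto.
  split. apply int_iii1; auto.
  split. apply int_iii2; auto.
  split. apply int_iii3; auto.
  split. apply int_iv1; auto.
  apply int_iv2; auto.
Qed.
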